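(* Suppose $B$ is a preorder on $\mathcal{SC}$. Then $\rho\dashv_B\overline{\rho}$ for every m-closed $\rho\in\mathcal{SC}$.
   Context: Fix base types $BT$ with preorder $\leq_{\mathsf b}$ and labels $\mathcal L$. Contract terms: $\sigma::=\mathbf 1\mid ?\mathtt t.\sigma\mid !\mathtt t.\sigma\mid !(\sigma).\sigma\mid ?(\sigma).\sigma\mid \sum_{i\in I}?l_i.\sigma_i\mid \bigoplus_{i\in I}!l_i.\sigma_i\mid \mu x.\sigma\mid x$ ($I$ finite nonempty, labels distinct). $\mathcal{SC}$ = closed guarded terms. LTS: $\mathbf 1\xrightarrow\checkmark$; $\lambda.\sigma\xrightarrow\lambda\sigma$ for prefixes (including $!l.\sigma$); $\bigoplus_{i\in I}!l_i.\sigma_i\xrightarrow\tau!l_i.\sigma_i$ for $|I|>1$; $\sum ?l_i.\sigma_i\xrightarrow{?l_i}\sigma_i$; $\mu x.\sigma\xrightarrow\tau\sigma[\mu x.\sigma/x]$. $\lambda_1\bowtie_B\lambda_2$ iff the pair is $(!l,?l)$, $(?l,!l)$, $(!\mathtt t_1,?\mathtt t_2)$ with $\mathtt t_1\leq_{\mathsf b}\mathtt t_2$, $(?\mathtt t_1,!\mathtt t_2)$ with $\mathtt t_2\leq_{\mathsf b}\mathtt t_1$, $(!(\sigma_1),?(\sigma_2))$ with $\sigma_1B\sigma_2$, $(?(\sigma_1),!(\sigma_2))$ with $\sigma_2B\sigma_1$. $\rho\|\sigma\xrightarrow\tau_B$ by a $\tau$ of either side or synchronisation on $\lambda_1\bowtie_B\lambda_2$.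 $\dashv_B$: greatest $R$ with $\rho R\sigma$ implying (i) if $\rho\|\sigma$ has no $\xrightarrow\tau_B$ move then $\rho\xrightarrow\checkmark$ and $\sigma\xrightarrow\checkmark$; (ii) every $\rho\|\sigma\xrightarrow\tau_B\rho'\|\sigma'$ has $\rho'R\sigma'$. Standard dual (messages unchanged): $\overline{\mathbf 1}=\mathbf 1$, $\overline x=x$, $\overline{\mu x.\sigma}=\mu x.\overline\sigma$, $?$ and $!$ prefixes (base-type and contract messages) swapped with the same message, $\overline{\sum_i ?l_i.\sigma_i}=\bigoplus_i !l_i.\overline{\sigma_i}$, $\overline{\bigoplus_i !l_i.\sigma_i}=\sum_i ?l_i.\overline{\sigma_i}$. M-closed: $\mathbf 1$ and $x$ are m-closed; $\mu x.\sigma'$ is m-closed if $\sigma'$ is; $!(\sigma^m).\sigma'$ and $?(\sigma^m).\sigma'$ are m-closed if $\sigma'$ is m-closed and $\sigma^m$ is closed; $?\mathtt t.\sigma'$, $!\mathtt t.\sigma'$ are m-closed if $\sigma'$ is; sums are m-closed if all summands' continuations are. *)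

(* Defs.v *)
From Stdlib Require Import List.
Import ListNotations.
Set Implicit Arguments.

Section Contracts.
Context (BT : Type) (L : Type).

(* Contract terms.  Ext = external choice  sum_{i} ?l_i.s_i,
   Int = internal choice  (+)_{i} !l_i.s_i  (the prefix !l.s is Int [(l,s)]).
   Recursion variables are named by nat. *)
Inductive term : Type :=
| One   : term
| InT   : BT -> term -> term
| OutT  : BT -> term -> term
| OutC  : term -> term -> term
| InC   : term -> term -> term
| Ext   : list (L * term) -> term
| Int   : list (L * term) -> term
| Mu    : nat -> term -> term
| Var   : nat -> term.

(* substitution s[r/x] (used only with closed r, so no capture) *)
Fixpoint subst (r : term) (x : nat) (s : term) : term :=
  match s with
  | One => One
  | InT t s' => InT t (subst r x s')
  | OutT t s' => OutT t (subst r x s')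
  | OutC m s' => OutC (subst r x m) (subst r x s')
  | InC m s' => InC (subst r x m) (subst r x s')
  | Ext bs => Ext (map (fun p => (fst p, subst r x (snd p))) bs)
  | Int bs => Int (map (fun p => (fst p, subst r x (snd p))) bs)
  | Mu y s' => if Nat.eqb x y then Mu y s' else Mu y (subst r x s')
  | Var y => if Nat.eqb x y then r else Var y
  end.

Inductive free (x : nat) : term -> Prop :=
| fr_InT t s : free x s -> free x (InT t s)
| fr_OutT t s : free x s -> free x (OutT t s)
| fr_OutC1 m s : free x m -> free x (OutC m s)
| fr_OutC2 m s : free x s -> free x (OutC m s)
| fr_InC1 m s : free x m -> free x (InC m s)
| fr_InC2 m s : free x s -> free x (InC m s)
| fr_Ext bs l s : In (l, s) bs -> free x s -> free x (Ext bs)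
| fr_Int bs l s : In (l, s) bs -> free x s -> free x (Int bs)
| fr_Mu y s : x <> y -> free x s -> free x (Mu y s)
| fr_Var : free x (Var x).

Definition closed (s : term) : Prop := forall x, ~ free x s.

Fixpoint unguarded (x : nat) (s : term) : Prop :=
  match s with
  | Var y => x = y
  | Mu y s' => x <> y /\ unguarded x s'
  | _ => False
  end.

Inductive guarded : term -> Prop :=
| g_One : guarded One
| g_Var x : guarded (Var x)
| g_InT t s : guarded s -> guarded (InT t s)
| g_OutT t s : guarded s -> guarded (OutT t s)
| g_OutC m s : guarded m -> guarded s -> guarded (OutC m s)
| g_InC m s : guarded m -> guarded s -> guarded (InC m s)
| g_Ext bs : (forall l s, In (l, s) bs -> guarded s) -> guarded (Ext bs)
| g_Int bs : (forall l s, In (l, s) bs -> guarded s) -> guarded (Int bs)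
| g_Mu x s : guarded s -> ~ unguarded x s -> guarded (Mu x s).

Inductive wf : term -> Prop :=
| w_One : wf One
| w_Var x : wf (Var x)
| w_InT t s : wf s -> wf (InT t s)
| w_OutT t s : wf s -> wf (OutT t s)
| w_OutC m s : wf m -> wf s -> wf (OutC m s)
| w_InC m s : wf m -> wf s -> wf (InC m s)
| w_Ext bs : bs <> [] -> NoDup (map fst bs) ->
    (forall l s, In (l, s) bs -> wf s) -> wf (Ext bs)
| w_Int bs : bs <> [] -> NoDup (map fst bs) ->
    (forall l s, In (l, s) bs -> wf s) -> wf (Int bs)
| w_Mu x s : wf s -> wf (Mu x s).

Definition SC (s : term) : Prop := wf s /\ closed s /\ guarded s.

Inductive act : Type :=
| aCheck | aTau
| aInT (t : BT) | aOutT (t : BT)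
| aInC (m : term) | aOutC (m : term)
| aInL (l : L) | aOutL (l : L).

Inductive step : term -> act -> term -> Prop :=
| st_One : step One aCheck One
| st_InT t s : step (InT t s) (aInT t) s
| st_OutT t s : step (OutT t s) (aOutT t) s
| st_InC m s : step (InC m s) (aInC m) s
| st_OutC m s : step (OutC m s) (aOutC m) s
| st_OutL l s : step (Int [(l, s)]) (aOutL l) s
| st_IntTau bs l s : 1 < length bs -> In (l, s) bs -> step (Int bs) aTau (Int [(l, s)])
| st_Ext bs l s : In (l, s) bs -> step (Ext bs) (aInL l) s
| st_Mu x s : step (Mu x s) aTau (subst (Mu x s) x s).

Definition compat (leb : BT -> BT -> Prop) (B : term -> term -> Prop)
  (a1 a2 : act) : Prop :=
  match a1, a2 with
  | aOutL l1, aInL l2 => l1 = l2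
  | aInL l1, aOutL l2 => l1 = l2
  | aOutT t1, aInT t2 => leb t1 t2
  | aInT t1, aOutT t2 => leb t2 t1
  | aOutC s1, aInC s2 => B s1 s2
  | aInC s1, aOutC s2 => B s2 s1
  | _, _ => False
  end.

Inductive sys_tau (leb : BT -> BT -> Prop) (B : term -> term -> Prop)
  : term -> term -> term -> term -> Prop :=
| sy_l r r' s : step r aTau r' -> sys_tau leb B r s r' s
| sy_r r s s' : step s aTau s' -> sys_tau leb B r s r s'
| sy_sync r r' s s' a1 a2 :
    step r a1 r' -> step s a2 s' -> compat leb B a1 a2 -> sys_tau leb B r s r' s'.

Definition compliance_rel (leb : BT -> BT -> Prop) (B : term -> term -> Prop)
  (R : term -> term -> Prop) : Prop :=
  forall r s, R r s ->
    ((forall r' s', ~ sys_tau leb B r s r' s') ->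
        (exists r1, step r aCheck r1) /\ (exists s1, step s aCheck s1)) /\
    (forall r' s', sys_tau leb B r s r' s' -> R r' s').

(* rho -|_B sigma : the greatest compliance relation *)
Definition complies (leb : BT -> BT -> Prop) (B : term -> term -> Prop)
  (r s : term) : Prop :=
  exists R, compliance_rel leb B R /\ R r s.

Fixpoint dual (s : term) : term :=
  match s with
  | One => One
  | Var x => Var x
  | Mu x s' => Mu x (dual s')
  | InT t s' => OutT t (dual s')
  | OutT t s' => InT t (dual s')
  | InC m s' => OutC m (dual s')
  | OutC m s' => InC m (dual s')
  | Ext bs => Int (map (fun p => (fst p, dual (snd p))) bs)
  | Int bs => Ext (map (fun p => (fst p, dual (snd p))) bs)
  end.

Inductive mclosed : term -> Prop :=
| mc_One : mclosed One
| mc_Var x : mclosed (Var x)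
| mc_Mu x s : mclosed s -> mclosed (Mu x s)
| mc_OutC m s : closed m -> mclosed s -> mclosed (OutC m s)
| mc_InC m s : closed m -> mclosed s -> mclosed (InC m s)
| mc_InT t s : mclosed s -> mclosed (InT t s)
| mc_OutT t s : mclosed s -> mclosed (OutT t s)
| mc_Ext bs : (forall l s, In (l, s) bs -> mclosed s) -> mclosed (Ext bs)
| mc_Int bs : (forall l s, In (l, s) bs -> mclosed s) -> mclosed (Int bs).

End Contracts.

Arguments One {BT L}.
Arguments Var {BT L}.

(* Main.v *)
Require Import Defs.
From Stdlib Require Import List Lia Arith.
Import ListNotations.

Inductive good {BT L : Type} : term BT L -> Prop :=
| gd_One : good One
| gd_Var x : good (Var x)
| gd_InT t s : good s -> good (InT t s)
| gd_OutT t s : good s -> good (OutT t s)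
| gd_OutC m s : SC m -> good s -> good (OutC m s)
| gd_InC m s : SC m -> good s -> good (InC m s)
| gd_Ext bs : bs <> [] -> NoDup (map fst bs) ->
    (forall l s, In (l, s) bs -> good s) -> good (Ext bs)
| gd_Int bs : bs <> [] -> NoDup (map fst bs) ->
    (forall l s, In (l, s) bs -> good s) -> good (Int bs)
| gd_Mu x s : good s -> good (Mu x s).

Lemma good_of {BT L : Type} (s : term BT L) :
  mclosed s -> wf s -> guarded s -> good s.
Proof.
  induction 1; intros Hw Hg; inversion Hw; subst; inversion Hg; subst;
    constructor; eauto; try (split; [|split]; assumption).
Qed.

Lemma subst_notfree {BT L : Type} (r : term BT L) x m :
  wf m -> ~ free x m -> subst r x m = m.
Proof.
  intros Hw; revert r x; induction Hw; intros r y Hf; simpl; auto.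
  - destruct (Nat.eqb_spec y x); subst; [ exfalso; apply Hf; constructor | auto].
  - rewrite IHHw; auto. intro; apply Hf; constructor; auto.
  - rewrite IHHw; auto. intro; apply Hf; constructor; auto.
  - rewrite IHHw1, IHHw2; auto; intro; apply Hf;
      first [apply fr_OutC1; assumption | apply fr_OutC2; assumption].
  - rewrite IHHw1, IHHw2; auto; intro; apply Hf;
      first [apply fr_InC1; assumption | apply fr_InC2; assumption].
  - f_equal. rewrite <- (map_id bs) at 2. apply map_ext_in. intros [l c] Hin.
    simpl. rewrite H2 with (l := l); auto. intro; apply Hf; econstructor; eauto.
  - f_equal. rewrite <- (map_id bs) at 2. apply map_ext_in. intros [l c] Hin.
    simpl. rewrite H2 with (l := l); auto. intro; apply Hf; econstructor; eauto.
  - destruct (Nat.eqb_spec y x); subst; auto. rewrite IHHw; auto.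
    intro; apply Hf; constructor; auto.
Qed.

Lemma SC_subst {BT L : Type} (r : term BT L) x m : SC m -> subst r x m = m.
Proof. intros [Hw [Hc _]]. apply subst_notfree; auto. Qed.

Lemma dual_subst {BT L : Type} (r s : term BT L) x :
  good s -> dual (subst r x s) = subst (dual r) x (dual s).
Proof.
  induction 1; simpl; auto.
  - destruct (Nat.eqb x x0); auto.
  - rewrite IHgood; auto.
  - rewrite IHgood; auto.
  - rewrite IHgood, (SC_subst r x m), (SC_subst (dual r) x m); auto.
  - rewrite IHgood, (SC_subst r x m), (SC_subst (dual r) x m); auto.
  - f_equal. rewrite !map_map. apply map_ext_in. intros [l c] Hin. simpl.
    rewrite H2 with (l := l); auto.
  - f_equal. rewrite !map_map. apply map_ext_in. intros [l c] Hin. simpl.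
    rewrite H2 with (l := l); auto.
  - destruct (Nat.eqb x x0); simpl; auto. rewrite IHgood; auto.
Qed.

Lemma in_map_pair {BT L : Type} (f : term BT L -> term BT L) (bs : list (L * term BT L)) l s0 :
  In (l, s0) (map (fun p : L * term BT L => (fst p, f (snd p))) bs) ->
  exists c, s0 = f c /\ In (l, c) bs.
Proof.
  intros H. apply in_map_iff in H. destruct H as [[l' c] [He Hin]].
  simpl in He. inversion He; subst. eauto.
Qed.

Lemma good_subst {BT L : Type} (r s : term BT L) x :
  good r -> good s -> good (subst r x s).
Proof.
  intros Hr; induction 1; simpl.
  - constructor.
  - destruct (Nat.eqb x x0); auto; constructor.
  - constructor; auto.
  - constructor; auto.
  - rewrite SC_subst; auto. constructor; auto.
  - rewrite SC_subst; auto. constructor; auto.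
  - constructor.
    + destruct bs; simpl; congruence.
    + rewrite map_map. simpl. exact H0.
    + intros l s0 Hin. apply in_map_pair in Hin as [c [-> Hin]]. eauto.
  - constructor.
    + destruct bs; simpl; congruence.
    + rewrite map_map. simpl. exact H0.
    + intros l s0 Hin. apply in_map_pair in Hin as [c [-> Hin]]. eauto.
  - destruct (Nat.eqb x x0); constructor; auto.
Qed.

Lemma free_subst {BT L : Type} (r s : term BT L) x y :
  good s -> free y (subst r x s) -> free y r \/ (free y s /\ y <> x).
Proof.
  intros Hg; revert y; induction Hg; simpl; intros y Hf.
  - inversion Hf.
  - destruct (Nat.eqb_spec x x0); auto. inversion Hf; subst. right; split; auto;
    constructor.
  - inversion Hf; subst. destruct (IHHg _ ltac:(eassumption)) as [?|[? ?]]; auto.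
    right; split; auto; constructor; auto.
  - inversion Hf; subst. destruct (IHHg _ ltac:(eassumption)) as [?|[? ?]]; auto.
    right; split; auto; constructor; auto.
  - rewrite SC_subst in Hf; auto. destruct H as [Hw [Hc Hgu]].
    inversion Hf; subst.
    + exfalso. eapply Hc; eassumption.
    + destruct (IHHg _ ltac:(eassumption)) as [?|[? ?]]; auto.
      right; split; auto; apply fr_OutC2; auto.
  - rewrite SC_subst in Hf; auto. destruct H as [Hw [Hc Hgu]].
    inversion Hf; subst.
    + exfalso. eapply Hc; eassumption.
    + destruct (IHHg _ ltac:(eassumption)) as [?|[? ?]]; auto.
      right; split; auto; apply fr_InC2; auto.
  - inversion Hf; subst.
    match goal with Hi : In _ (map _ _) |- _ => apply in_map_pair in Hi as [c [-> Hin]] end.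
    destruct (H2 _ _ Hin y ltac:(eassumption)) as [?|[? ?]]; auto.
    right; split; auto; econstructor; eauto.
  - inversion Hf; subst.
    match goal with Hi : In _ (map _ _) |- _ => apply in_map_pair in Hi as [c [-> Hin]] end.
    destruct (H2 _ _ Hin y ltac:(eassumption)) as [?|[? ?]]; auto.
    right; split; auto; econstructor; eauto.
  - destruct (Nat.eqb_spec x x0); subst.
    + right. split; auto. inversion Hf; auto.
    + inversion Hf; subst. destruct (IHHg _ ltac:(eassumption)) as [?|[? ?]]; auto.
      right; split; auto; constructor; auto.
Qed.

Definition inv {BT L : Type} (a : term BT L) := closed a /\ good a.

Lemma inv_unfold {BT L : Type} x (c : term BT L) :
  inv (Mu x c) -> inv (subst (Mu x c) x c).
Proof.
  intros [Hc Hg]. inversion Hg; subst. split.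
  - intros y Hf. destruct (free_subst (Mu x c) c x y H0 Hf) as [?|[? ?]].
    + eapply Hc; eauto.
    + eapply Hc. constructor; eauto.
  - apply good_subst; auto.
Qed.

Lemma dual_unfold {BT L : Type} x (c : term BT L) :
  good (Mu x c) -> dual (subst (Mu x c) x c) = subst (Mu x (dual c)) x (dual c).
Proof. intros Hg; inversion Hg; subst. rewrite dual_subst; auto. Qed.

Inductive UF {BT L : Type} : term BT L -> term BT L -> Prop :=
| UF_refl a : UF a a
| UF_step x c b : UF (subst (Mu x c) x c) b -> UF (Mu x c) b.

Lemma UF_snoc {BT L : Type} (a : term BT L) x c :
  UF a (Mu x c) -> UF a (subst (Mu x c) x c).
Proof.
  intros H. remember (Mu x c) as m. induction H; subst.
  - apply UF_step, UF_refl.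
  - apply UF_step; auto.
Qed.

Lemma UF_nonmu {BT L : Type} (a b : term BT L) :
  UF a b -> (forall x c, a <> Mu x c) -> b = a.
Proof. intros H Hn; inversion H; subst; auto. exfalso; eapply Hn; eauto. Qed.

Definition Mr {BT L : Type} (a r : term BT L) :=
  r = a \/ exists bs l c, a = Int bs /\ r = Int [(l, c)] /\ In (l, c) bs.
Definition Ms {BT L : Type} (b s : term BT L) :=
  s = dual b \/ exists bs l c, b = Ext bs /\ s = Int [(l, dual c)] /\ In (l, c) bs.
Definition Rel {BT L : Type} (r s : term BT L) :=
  exists a b, inv a /\ inv b /\ (UF a b \/ UF b a) /\ Mr a r /\ Ms b s.

Lemma Rel_diag {BT L : Type} (k : term BT L) : inv k -> Rel k (dual k).
Proof.
  intros H. exists k, k. repeat split; try apply H.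
  - left; constructor.
  - left; auto.
  - left; auto.
Qed.

Lemma nodup_in {BT L : Type} (bs : list (L * term BT L)) l c c' :
  NoDup (map fst bs) -> In (l, c) bs -> In (l, c') bs -> c = c'.
Proof.
  induction bs as [|[l0 c0] bs IH]; simpl; intros Hn H1 H2; [contradiction|].
  inversion Hn; subst.
  destruct H1 as [H1|H1]; destruct H2 as [H2|H2].
  - inversion H1; inversion H2; subst; auto.
  - inversion H1; subst. exfalso; apply H3. apply in_map_iff; exists (l, c'); auto.
  - inversion H2; subst. exfalso; apply H3. apply in_map_iff; exists (l, c); auto.
  - eauto.
Qed.

Lemma inv_sub {BT L : Type} (a k : term BT L) :
  inv a ->
  (forall y, free y k -> free y a) -> (good a -> good k) -> inv k.
Proof. intros [Hc Hg] Hf Hg'. split; auto. intros y Hy; eapply Hc; eauto. Qed.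

Lemma step_Int {BT L : Type} (xs : list (L * term BT L)) a s' :
  step (Int xs) a s' -> a = aTau BT L \/ exists l : L, a = aOutL BT l /\ In (l, s') xs.
Proof. intros H; inversion H; subst; auto. right; exists l; simpl; auto. Qed.

Lemma step_Ext {BT L : Type} (xs : list (L * term BT L)) a s' :
  step (Ext xs) a s' -> exists l : L, a = aInL BT l /\ In (l, s') xs.
Proof. intros H; inversion H; subst; eauto. Qed.

Lemma compat_tau_l {BT L : Type} leb B (a2 : act BT L) :
  ~ compat leb B (aTau BT L) a2.
Proof. destruct a2; simpl; auto. Qed.

Lemma compat_tau_r {BT L : Type} leb B (a1 : act BT L) :
  ~ compat leb B a1 (aTau BT L).
Proof. destruct a1; simpl; auto. Qed.

Ltac sub_inv Hcl Hg :=
  split; [ intros ?y ?Hy; apply (Hcl y);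
           first [ constructor; assumption | apply fr_OutC2; assumption
                 | apply fr_InC2; assumption | econstructor; eassumption ]
         | inversion Hg; subst; eauto ].

Lemma Rel_compliance {BT L : Type} (leb : BT -> BT -> Prop)
  (leb_refl : forall t, leb t t)
  (B : term BT L -> term BT L -> Prop)
  (B_refl : forall s, SC s -> B s s) :
  compliance_rel leb B Rel.
Proof.
  intros r s (a & b & Ia & Ib & Hu & Hr & Hs). split.
  - intros Hstuck.
    assert (Ha : forall x c, a <> Mu x c).
    { intros x c ->. destruct Hr as [->|(?&?&?&E&_)]; [|discriminate].
      eapply Hstuck; apply sy_l; constructor. }
    assert (Hb : forall x c, b <> Mu x c).
    { intros x c ->. destruct Hs as [->|(?&?&?&E&_)]; [|discriminate].
      simpl in Hstuck. eapply Hstuck; apply sy_r; constructor. }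
    assert (a = b) by (destruct Hu as [H|H];
      [symmetry; apply (UF_nonmu _ _ H Ha) | apply (UF_nonmu _ _ H Hb)]).
    subst b. destruct Ia as [Hcl Hg]. destruct a.
    + destruct Hr as [->|(?&?&?&E&_)]; [|discriminate].
      destruct Hs as [->|(?&?&?&E&_)]; [|discriminate].
      split; eexists; constructor.
    + destruct Hr as [->|(?&?&?&E&_)]; [|discriminate].
      destruct Hs as [->|(?&?&?&E&_)]; [|discriminate].
      exfalso; eapply Hstuck; eapply sy_sync; [constructor|constructor|simpl; apply leb_refl].
    + destruct Hr as [->|(?&?&?&E&_)]; [|discriminate].
      destruct Hs as [->|(?&?&?&E&_)]; [|discriminate].
      exfalso; eapply Hstuck; eapply sy_sync; [constructor|constructor|simpl; apply leb_refl].
    + destruct Hr as [->|(?&?&?&E&_)]; [|discriminate].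
      destruct Hs as [->|(?&?&?&E&_)]; [|discriminate].
      exfalso; eapply Hstuck; eapply sy_sync; [constructor|constructor|simpl].
      apply B_refl; inversion Hg; auto.
    + destruct Hr as [->|(?&?&?&E&_)]; [|discriminate].
      destruct Hs as [->|(?&?&?&E&_)]; [|discriminate].
      exfalso; eapply Hstuck; eapply sy_sync; [constructor|constructor|simpl].
      apply B_refl; inversion Hg; auto.
    + destruct Hr as [->|(?&?&?&E&_)]; [|discriminate].
      destruct Hs as [->|(bs&lx&c&E&->&Hin)].
      * inversion Hg; subst. destruct l as [|[lb cb] [|q bs']]; [congruence| |].
        -- exfalso; eapply Hstuck; eapply sy_sync;
             [apply st_Ext; left; reflexivity | apply st_OutL | simpl; reflexivity].
        -- exfalso; eapply Hstuck; apply sy_r; simpl;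
             apply st_IntTau with (l := lb) (s := dual cb); [simpl; lia | left; reflexivity].
      * inversion E; subst.
        exfalso; eapply Hstuck; eapply sy_sync;
          [apply st_Ext; eassumption | apply st_OutL | simpl; reflexivity].
    + destruct Hs as [->|(?&?&?&E&_)]; [|discriminate].
      destruct Hr as [->|(bs&lx&c&E&->&Hin)].
      * inversion Hg; subst. destruct l as [|[lb cb] [|q bs']]; [congruence| |].
        -- exfalso; eapply Hstuck; eapply sy_sync;
             [apply st_OutL | apply st_Ext; left; reflexivity | simpl; reflexivity].
        -- exfalso; eapply Hstuck; apply sy_l;
             apply st_IntTau with (l := lb) (s := cb); [simpl; lia | left; reflexivity].
      * inversion E; subst.
        exfalso; eapply Hstuck; eapply sy_sync;
          [apply st_OutL | apply st_Ext | simpl; reflexivity].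
        apply in_map_iff; exists (lx, c); auto.
    + exfalso; eapply Ha; reflexivity.
    + exfalso; apply (Hcl n); constructor.
  - intros r' s' Hst.
    destruct Hst as [r0 r1 s0 H | r0 s0 s1 H | r0 r1 s0 s1 a1 a2 H1 H2 Hc].
    + destruct Hr as [->|(bs&l&c&->&->&Hin)].
      * inversion H; subst.
        -- exists (Int bs), b. split; [exact Ia|split; [exact Ib|split; [exact Hu|split; [right; exists bs, l, s; auto|exact Hs]]]].
        -- exists (subst (Mu x s) x s), b. split; [apply inv_unfold; auto|].
           split; auto. split; [|split; auto; left; reflexivity].
           destruct Hu as [Hu|Hu].
           ++ inversion Hu; subst; [right; apply UF_step, UF_refl | left; assumption].
           ++ right; apply UF_snoc; auto.
      * inversion H; subst. simpl in *; lia.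
    + destruct Hs as [->|(bs&l&c&->&->&Hin)].
      * destruct b; simpl in H; inversion H; subst.
        -- match goal with Hi : In _ (map _ _) |- _ => apply in_map_pair in Hi as [c [-> Hin]] end.
           exists a, (Ext l). split; [exact Ia|split; [exact Ib|split; [exact Hu|split; [exact Hr|right; exists l, l0, c; auto]]]].
        -- exists a, (subst (Mu n b) n b). split; auto. split; [apply inv_unfold; auto|].
           split; [|split; auto; left; symmetry; apply dual_unfold; apply Ib].
           destruct Hu as [Hu|Hu].
           ++ left; apply UF_snoc; auto.
           ++ inversion Hu; subst; [left; apply UF_step, UF_refl | right; assumption].
      * inversion H; subst. simpl in *; lia.
    + assert (Ha : forall x c, a <> Mu x c).
      { intros x c ->. destruct Hr as [->|(?&?&?&E&_)]; [|discriminate].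
        inversion H1; subst. eapply compat_tau_l; eauto. }
      assert (Hb : forall x c, b <> Mu x c).
      { intros x c ->. destruct Hs as [->|(?&?&?&E&_)]; [|discriminate].
        simpl in H2. inversion H2; subst. eapply compat_tau_r; eauto. }
      assert (a = b) by (destruct Hu as [H|H];
        [symmetry; apply (UF_nonmu _ _ H Ha) | apply (UF_nonmu _ _ H Hb)]).
      subst b. pose proof Ia as Ia'. destruct Ia' as [Hcl Hg]. destruct a.
      * destruct Hr as [->|(?&?&?&E&_)]; [|discriminate].
        inversion H1; subst. destruct a2; simpl in Hc; contradiction.
      * destruct Hr as [->|(?&?&?&E&_)]; [|discriminate].
        destruct Hs as [->|(?&?&?&E&_)]; [|discriminate].
        inversion H1; subst; inversion H2; subst. apply Rel_diag. sub_inv Hcl Hg.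
      * destruct Hr as [->|(?&?&?&E&_)]; [|discriminate].
        destruct Hs as [->|(?&?&?&E&_)]; [|discriminate].
        inversion H1; subst; inversion H2; subst. apply Rel_diag. sub_inv Hcl Hg.
      * destruct Hr as [->|(?&?&?&E&_)]; [|discriminate].
        destruct Hs as [->|(?&?&?&E&_)]; [|discriminate].
        inversion H1; subst; inversion H2; subst. apply Rel_diag. sub_inv Hcl Hg.
      * destruct Hr as [->|(?&?&?&E&_)]; [|discriminate].
        destruct Hs as [->|(?&?&?&E&_)]; [|discriminate].
        inversion H1; subst; inversion H2; subst. apply Rel_diag. sub_inv Hcl Hg.
      * destruct Hr as [->|(?&?&?&E&_)]; [|discriminate].
        apply step_Ext in H1 as [l1 [-> Hin1]].
        assert (Hnd : NoDup (map fst l)) by (inversion Hg; auto).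
        assert (exists (l2 : L) (c' : term BT L), a2 = aOutL BT l2 /\ s1 = dual c' /\ In (l2, c') l)
          as (l2 & c' & -> & -> & Hin2).
        { destruct Hs as [->|(bs&l3&c&E&->&Hin)].
          - simpl in H2. apply step_Int in H2 as [->|[l2 [-> Hin2]]].
            + exfalso; eapply compat_tau_r; eauto.
            + apply in_map_pair in Hin2 as [c' [-> Hin2]]. eauto.
          - inversion E; subst. apply step_Int in H2 as [->|[l2 [-> Hin2]]].
            + exfalso; eapply compat_tau_r; eauto.
            + destruct Hin2 as [Hin2|[]]. inversion Hin2; subst. eauto. }
        simpl in Hc; subst.
        pose proof (nodup_in _ _ _ _ Hnd Hin1 Hin2) as Heq; subst. apply Rel_diag. sub_inv Hcl Hg.
      * destruct Hs as [->|(?&?&?&E&_)]; [|discriminate].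
        assert (Hnd : NoDup (map fst l)) by (inversion Hg; auto).
        assert (exists l1 : L, a1 = aOutL BT l1 /\ In (l1, r1) l) as (l1 & -> & Hin1).
        { destruct Hr as [->|(bs&l3&c&E&->&Hin)].
          - apply step_Int in H1 as [->|[l2 [-> Hin2]]].
            + exfalso; eapply compat_tau_l; eauto.
            + eauto.
          - inversion E; subst. apply step_Int in H1 as [->|[l2 [-> Hin2]]].
            + exfalso; eapply compat_tau_l; eauto.
            + destruct Hin2 as [Hin2|[]]. inversion Hin2; subst. eauto. }
        simpl in H2. apply step_Ext in H2 as [l2 [-> Hin2]].
        apply in_map_pair in Hin2 as [c' [-> Hin2]].
        simpl in Hc; subst.
        pose proof (nodup_in _ _ _ _ Hnd Hin1 Hin2) as Heq; subst. apply Rel_diag. sub_inv Hcl Hg.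
      * exfalso; eapply Ha; reflexivity.
      * destruct Hr as [->|(?&?&?&E&_)]; [inversion H1|discriminate].
Qed.

Theorem mainTheorem8
  (BT : Type) (L : Type) (leb : BT -> BT -> Prop)
  (leb_refl : forall t, leb t t)
  (leb_trans : forall t1 t2 t3, leb t1 t2 -> leb t2 t3 -> leb t1 t3)
  (B : term BT L -> term BT L -> Prop)
  (B_on_SC : forall s1 s2, B s1 s2 -> SC s1 /\ SC s2)
  (B_refl : forall s, SC s -> B s s)
  (B_trans : forall s1 s2 s3, B s1 s2 -> B s2 s3 -> B s1 s3) :
  forall rho : term BT L, SC rho -> mclosed rho -> complies leb B rho (dual rho).
Proof.
  intros rho [Hw [Hc Hg]] Hm. exists Rel. split.
  - apply Rel_compliance; auto.
  - apply Rel_diag. split; auto. apply good_of; auto.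
Qed.
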